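(* Let $0\leq \alpha < 1$ and let $G$ be a connected graph with $n$ vertices and $m$ edges. Let $1\leq k\leq n$ and let $U=\{u_1,\ldots,u_{k-1}\}\subseteq V(G)$ be any set of $k-1$ vertices (empty if $k=1$). Then $$S_{k}(A_{\alpha}(G)) \geq \left(\alpha-\frac{1}{n-k+1}\right)\sum_{u\in U}d_u+\frac{2m-(1-\alpha)|\partial(U, V(G)\setminus U)|}{n-k+1}.$$
   Context: All graphs are simple and undirected. $d_u$ is the degree of vertex $u$. $A_{\alpha}(G)=\alpha D(G)+(1-\alpha)A(G)$, where $A(G)$ is the adjacency matrix and $D(G)$ the diagonal degree matrix. For a real symmetric matrix $M$ with eigenvalues $\lambda_1(M)\geq\cdots\geq\lambda_n(M)$, $S_k(M)=\sum_{i=1}^k\lambda_i(M)$. For $U,W\subseteq V(G)$, $\partial(U,W)$ is the set of edges joining a vertex of $U$ with a vertex of $W$. *)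

(* Defs.v *)
From HB Require Import structures.
From mathcomp Require Import all_boot all_order all_algebra.
Set Implicit Arguments. Unset Strict Implicit. Unset Printing Implicit Defensive.
Import Order.TTheory GRing.Theory Num.Theory.
Local Open Scope ring_scope.

Definition simple_graph (n : nat) (e : rel 'I_n) : Prop :=
  symmetric e /\ irreflexive e.

Definition connected_graph (n : nat) (e : rel 'I_n) : Prop :=
  forall x y : 'I_n, connect e x y.

Definition deg (n : nat) (e : rel 'I_n) (u : 'I_n) : nat := #|[set v | e u v]|.

Definition edges (n : nat) (e : rel 'I_n) : {set {set 'I_n}} :=
  [set E : {set 'I_n} | [exists u, exists v, e u v && (E == [set u; v])]].

Definition nedges (n : nat) (e : rel 'I_n) : nat := #|edges e|.

Definition boundary (n : nat) (e : rel 'I_n) (U W : {set 'I_n}) : {set {set 'I_n}} :=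
  [set E in edges e | [exists u in U, exists w in W, E == [set u; w]]].

Definition adjmx (R : nzRingType) (n : nat) (e : rel 'I_n) : 'M[R]_n :=
  \matrix_(i, j) (e i j)%:R.
Definition degmx (R : nzRingType) (n : nat) (e : rel 'I_n) : 'M[R]_n :=
  diag_mx (\row_i (deg e i)%:R).
Definition Aalpha (R : nzRingType) (n : nat) (e : rel 'I_n) (a : R) : 'M[R]_n :=
  a *: degmx R e + (1 - a) *: adjmx R e.

(* l is the list of eigenvalues of A (with algebraic multiplicity), in
   nonincreasing order: lambda_1 >= ... >= lambda_n. *)
Definition eigen_seq (R : numDomainType) (n : nat) (A : 'M[R]_n) (l : seq R) : Prop :=
  [/\ size l = n, sorted >=%R l & char_poly A = \prod_(x <- l) ('X - x%:P)].

Definition Sk (R : numDomainType) (k : nat) (l : seq R) : R := \sum_(i < k) l`_i.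
Arguments adjmx R [n] e.
Arguments degmx R [n] e.
Arguments Aalpha R [n] e a.

(* Main.v *)
Require Import Defs.
From HB Require Import structures.
From mathcomp Require Import all_boot all_order all_algebra.
From mathcomp Require Import complex ring lra perm zify.
Import Order.TTheory GRing.Theory Num.Theory.
Set Implicit Arguments. Unset Strict Implicit. Unset Printing Implicit Defensive.

Lemma set2_eq (T : finType) (a b c d : T) : [set a; b] = [set c; d] ->
  (a = c /\ b = d) \/ (a = d /\ b = c).
Proof.
move=> H.
have /set2P ha : a \in [set c; d] by rewrite -H set21.
have /set2P hb : b \in [set c; d] by rewrite -H set22.
have /set2P hc : c \in [set a; b] by rewrite H set21.
have /set2P hd : d \in [set a; b] by rewrite H set22.
destruct ha, hb, hc, hd; subst; intuition congruence.
Qed.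

Section Graph.
Variables (n : nat) (e : rel 'I_n).
Hypothesis esym : symmetric e.
Hypothesis eirr : irreflexive e.

Lemma degE u : deg e u = (\sum_j e u j)%N.
Proof.
rewrite /deg -sum1_card big_mkcond /=; apply: eq_bigr => j _.
by rewrite inE; case: (e u j).
Qed.

Lemma card_setE (T : finType) (P : pred T) : #|[set x | P x]| = (\sum_x P x)%N.
Proof.
rewrite -sum1_card big_mkcond /=; apply: eq_bigr => j _.
by rewrite inE; case: (P j).
Qed.

Lemma handshake : (2 * nedges e = \sum_u deg e u)%N.
Proof.
pose Lp := [set p : 'I_n * 'I_n | (p.1 < p.2)%N && e p.1 p.2].
have edE : edges e = [set [set p.1; p.2] | p in Lp].
  apply/setP => E; apply/idP/idP.
    rewrite inE => /existsP [a /existsP [b /andP [eab /eqP ->]]].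
    have [ab|ba|ab] := ltngtP a b.
    - by apply/imsetP; exists (a, b) => //; rewrite inE /= ab eab.
    - apply/imsetP; exists (b, a); first by rewrite inE /= ba esym eab.
      by rewrite /= setUC.
    - by move: eab; rewrite (val_inj ab) eirr.
  case/imsetP => -[a b]; rewrite inE /= => /andP [_ eab] ->.
  by rewrite inE; apply/existsP; exists a; apply/existsP; exists b; rewrite eab eqxx.
have inj : {in Lp &, injective (fun p : 'I_n * 'I_n => [set p.1; p.2])}.
  move=> [a b] [c d]; rewrite !inE /= => /andP [ab _] /andP [cd _].
  case/set2_eq => -[ac bd]; first by rewrite ac bd.
  by move: ab cd; rewrite ac bd => h1 h2; move: (ltn_trans h1 h2); rewrite ltnn.
rewrite /nedges edE card_in_imset // card_setE.
rewrite (eq_bigr (fun u : 'I_n => \sum_(j : 'I_n) ((u < j)%N && e u j) + \sum_(j : 'I_n) ((j < u)%N && e u j)))%N; last first.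
  move=> u _; rewrite degE -big_split /=; apply: eq_bigr => j _.
  have [uj|ju|uj] := ltngtP u j; rewrite ?andbF ?andbT ?addn0 //.
  by rewrite (val_inj uj) eirr.
rewrite big_split /= [X in (_ + X)%N]exchange_big /=.
have -> : (\sum_(i : 'I_n) \sum_(j : 'I_n) ((i < j)%N && e j i) = \sum_(i : 'I_n) \sum_(j : 'I_n) ((i < j)%N && e i j))%N.
  by apply: eq_bigr => i _; apply: eq_bigr => j _; rewrite esym.
rewrite addnn -mul2n; congr (2 * _)%N.
by rewrite pair_big /=.
Qed.

Lemma boundaryE (U : {set 'I_n}) :
  #|boundary e U (~: U)| = (\sum_(u in U) \sum_(w in ~: U) e u w)%N.
Proof.
pose Bp := [set p : 'I_n * 'I_n | [&& p.1 \in U, p.2 \in ~: U & e p.1 p.2]].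
have bE : boundary e U (~: U) = [set [set p.1; p.2] | p in Bp].
  apply/setP => E; apply/idP/idP.
    rewrite inE => /andP [].
    rewrite inE => /existsP [a /existsP [b /andP [eab /eqP ->]]].
    case/exists_inP => u uU /exists_inP [w wW /eqP H].
    apply/imsetP; exists (u, w) => //; rewrite inE /= uU wW /=.
    by case/set2_eq: H => -[<- <-] //; rewrite esym.
  case/imsetP => -[a b]; rewrite inE /= => /and3P [aU bW eab] ->.
  rewrite inE; apply/andP; split.
    by rewrite inE; apply/existsP; exists a; apply/existsP; exists b; rewrite eab eqxx.
  by apply/exists_inP; exists a => //; apply/exists_inP; exists b.
have inj : {in Bp &, injective (fun p : 'I_n * 'I_n => [set p.1; p.2])}.
  move=> [a b] [c d]; rewrite !inE /= => /and3P [aU bW _] /and3P [cU dW _].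
  case/set2_eq => -[ac bd] //; first by rewrite ac bd.
  by move: aU; rewrite ac (negbTE dW).
rewrite bE card_in_imset // card_setE.
rewrite pair_big /= [RHS]big_mkcond /=; apply: eq_bigr => -[a b] _ /=.
by case: (a \in U); case: (b \in ~: U).
Qed.

End Graph.

Local Open Scope ring_scope.
Local Open Scope sesquilinear_scope.

Lemma weights_le (C : numDomainType) n m (L w : 'I_n -> C) :
  (forall i j : 'I_n, (i <= j)%N -> L j <= L i) ->
  (forall i, 0 <= w i) -> (forall i, w i <= 1) -> \sum_(i < n) w i = m%:R ->
  (0 < m <= n)%N ->
  \sum_(i < n) L i * w i <= \sum_(i < n | (i < m)%N) L i.
Proof.
move=> Lmono w0 w1 sw /andP[m0 mn].
have m1n : (m.-1 < n)%N by rewrite prednK.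
set c := L (Ordinal m1n).
have sind : \sum_(i < n) ((i < m)%N%:R : C) = m%:R.
  transitivity (\sum_(i < n | (i < m)%N) (1:C)).
    rewrite [RHS]big_mkcond; apply: eq_bigr => i _; by case: ifP.
  by rewrite -(big_ord_widen n (fun _ => (1:C)) mn) sumr_const card_ord.
have key : \sum_(i < n | (i < m)%N) L i - \sum_(i < n) L i * w i =
  \sum_(i < n) (if (i < m)%N then (L i - c) * (1 - w i) else (c - L i) * w i).
  have -> : \sum_(i < n) (if (i < m)%N then (L i - c) * (1 - w i) else (c - L i) * w i)
     = \sum_(i < n) ((if (i < m)%N then L i else 0) - L i * w i - c * ((i < m)%N%:R - w i)).
    by apply: eq_bigr => i _; case: ifP => _; rewrite ?mulr1n ?mulr0n; ring.
  have e1 : \sum_(i < n) c * ((i < m)%N%:R - w i) = 0.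
    by rewrite -mulr_sumr sumrB sind sw subrr mulr0.
  by rewrite sumrB e1 subr0 sumrB -big_mkcond.
rewrite -subr_ge0 key; apply: sumr_ge0 => i _; case: ifP => im.
  apply: mulr_ge0; last by rewrite subr_ge0.
  by rewrite subr_ge0 Lmono //= -ltnS prednK.
apply: mulr_ge0 => //; rewrite subr_ge0 Lmono //=.
by apply: (leq_trans (leq_pred m)); rewrite leqNgt im.
Qed.
Lemma trmxC_mul (C : numClosedFieldType) m n p (A : 'M[C]_(m,n)) (B : 'M[C]_(n,p)) :
  (A *m B)^t* = B^t* *m A^t*.
Proof. by rewrite trmx_mul map_mxM. Qed.

Lemma bessel (C : numClosedFieldType) m n (Y : 'M[C]_(m,n)) (p : 'rV[C]_n) :
  Y *m Y^t* = 1%:M ->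
  \sum_(i < m) (p *m Y^t*) 0 i * ((p *m Y^t*) 0 i)^* <= (p *m p^t*) 0 0.
Proof.
move=> YY.
set c := p *m Y^t*.
have cE : Y *m p^t* = c^t* by rewrite /c trmxC_mul trmxCK.
have E : (p - c *m Y) *m (p - c *m Y)^t* = p *m p^t* - c *m c^t*.
  rewrite !(linearB, map_mxB) /= !mulmxBl trmxC_mul.
  rewrite -!mulmxA [Y *m (Y^t* *m _)]mulmxA YY mul1mx cE [p *m (Y^t* *m _)]mulmxA -/c.
  by rewrite opprB addrA subrK.
have : 0 <= ((p - c *m Y) *m (p - c *m Y)^t*) 0 0.
  rewrite !mxE; apply: sumr_ge0 => k _; rewrite !mxE; exact: mul_conjC_ge0.
rewrite E !mxE subr_ge0; apply: le_trans.
by rewrite le_eqVlt; apply/orP; left; apply/eqP; apply: eq_bigr => i _; rewrite !mxE.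
Qed.
Lemma char_poly_sim (F : fieldType) n (P D : 'M[F]_n) : P \in unitmx ->
  char_poly (invmx P *m D *m P) = char_poly D.
Proof.
move=> Pu.
have E : char_poly_mx (invmx P *m D *m P) =
    map_mx polyC (invmx P) *m char_poly_mx D *m map_mx polyC P.
  rewrite /char_poly_mx mulmxBr mulmxBl !map_mxM; congr (_ - _).
  rewrite -mulmxA -scalar_mxC mulmxA -map_mxM mulVmx // map_mx1 mul1mx //.
rewrite /char_poly E !det_mulmx mulrC mulrA -det_mulmx.
by rewrite -map_mxM mulmxV // map_mx1 det1 mul1r.
Qed.

Lemma kyfan (R : rcfType) n m (A : 'M[R]_n) (X : 'M[R]_(m,n)) l :
  A^T = A -> X *m X^T = 1%:M -> eigen_seq A l -> (0 < m <= n)%N ->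
  \tr (X *m A *m X^T) <= Sk m l.
Proof.
move=> Asym XX [szl sl cpA] mn.
pose f := real_complex R.
pose Ac := map_mx f A; pose Xc := map_mx f X.
have realf (x : R) : (f x)^* = f x.
  by apply: conj_Creal; apply/complex_realP; exists x.
have Acc : Ac^t* = Ac.
  apply/matrixP => i j; rewrite !mxE realf; congr f.
  by rewrite -[in RHS]Asym mxE.
have Xcc : Xc^t* = Xc^T by apply/matrixP => i j; rewrite !mxE realf.
have Anorm : Ac \is normalmx by apply/normalmxP; rewrite Acc.
set P := spectralmx Ac; set d := spectral_diag Ac.
have /orthomx_spectralP AE := Anorm; rewrite -/P -/d in AE.
have Pu : P \is unitarymx := spectral_unitarymx Ac.
have Punit : P \in unitmx := spectral_unit Ac.
have PinvE : invmx P = P^t* := invmx_unitary Pu.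
have PPt : P *m P^t* = 1%:M by apply/unitarymxP.
have PtP : P^t* *m P = 1%:M by rewrite -PinvE mulVmx.
have cpAc : char_poly Ac = \prod_(x <- map f l) ('X - x%:P).
  rewrite -map_char_poly cpA rmorph_prod big_map; apply: eq_bigr => x _.
  by rewrite rmorphB /= map_polyX map_polyC.
have cpD : char_poly Ac = \prod_(x <- [tuple d 0 i | i < n]) ('X - x%:P).
  rewrite {1}AE char_poly_sim // char_poly_trig ?diag_mx_is_trig //.
  rewrite /= big_map big_enum /=; apply: eq_bigr => i _.
  by rewrite mxE eqxx mulr1n.
have /perm.tuple_permP [p hp] : perm_eq (map f l) [tuple d 0 i | i < n].
  by apply: prod_XsubC_eq; rewrite -cpAc cpD.
have lE (i : 'I_n) : f (l`_i) = d 0 (p i).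
  have := congr1 (fun s => nth 0 s i) hp.
  by rewrite (nth_map 0) ?szl //= nth_mktuple tnth_mktuple.
pose W := P *m Xc^T.
pose w := fun j : 'I_n => \sum_(i < m) W j i * (W j i)^*.
have WtE : W^t* = Xc *m P^t*.
  by rewrite /W trmxC_mul -Xcc trmxCK.
have trE : f (\tr (X *m A *m X^T)) = \sum_j d 0 j * w j.
  rewrite /f -trace_map_mx !map_mxM -map_trmx -/f -/Ac -/Xc AE PinvE.
  have -> : Xc *m (P^t* *m diag_mx d *m P) *m Xc^T = W^t* *m diag_mx d *m W.
    by rewrite WtE /W !mulmxA.
  rewrite /mxtrace /=.
  rewrite (eq_bigr (fun i => \sum_j d 0 j * (W j i * (W j i)^*))); last first.
    move=> i _; rewrite mxE; apply: eq_bigr => j _; rewrite mul_mx_diag !mxE; ring.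
  by rewrite exchange_big; apply: eq_bigr => j _; rewrite mulr_sumr.
have XcXc : Xc *m Xc^t* = 1%:M.
  by rewrite Xcc /Xc /f map_trmx -map_mxM XX map_mx1.
have w0 (j : 'I_n) : 0 <= w j.
  by apply: sumr_ge0 => i _; exact: mul_conjC_ge0.
have w1 (j : 'I_n) : w j <= 1.
  have := bessel (row j P) XcXc; rewrite Xcc -row_mul -/W.
  have -> : (row j P *m (row j P)^t*) 0 0 = (P *m P^t*) j j.
    by rewrite !mxE; apply: eq_bigr => k _; rewrite !mxE.
  rewrite PPt mxE eqxx mulr1n.
  have -> : \sum_(i < m) (row j W) 0 i * ((row j W) 0 i)^* = w j.
    by apply: eq_bigr => i _; rewrite !mxE.
  by [].
have sw : \sum_j w j = m%:R.
  rewrite /w exchange_big /=.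
  transitivity (\tr (W^t* *m W)).
    rewrite /mxtrace; apply: eq_bigr => i _; rewrite mxE; apply: eq_bigr => j _.
    by rewrite !mxE mulrC.
  rewrite WtE /W -mulmxA [P^t* *m (P *m _)]mulmxA PtP mul1mx -Xcc XcXc.
  by rewrite mxtrace1.
have mn' : (m <= n)%N by case/andP: mn.
rewrite -lecR -/f trE /Sk /f rmorph_sum -/f (big_ord_widen n (fun i => f l`_i) mn').
rewrite (reindex_inj (@perm_inj _ p)) /=.
under eq_bigr => i _ do rewrite -lE.
have geT : transitive (>=%R : rel R) by move=> a b c h1 h2; exact: le_trans h2 h1.
have geR : reflexive (>=%R : rel R) by move=> x; exact: lexx.
apply: (weights_le (L := fun i : 'I_n => f l`_i) (w := fun i => w (p i))) => //.
- move=> i j ij; rewrite lecR.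
  by apply: (sorted_leq_nth geT geR 0 sl) => //; rewrite inE szl.
- by rewrite -sw [RHS](reindex_inj (@perm_inj _ p)).
Qed.

Local Close Scope sesquilinear_scope.

Lemma sum_ind (R : nzRingType) (T : finType) (P : pred T) :
  \sum_(x : T) ((P x)%:R : R) = #|P|%:R.
Proof.
rewrite -sum1_card natr_sum [RHS]big_mkcond /=; apply: eq_bigr => x _.
by rewrite unfold_in; case: (P x).
Qed.

Theorem theorem5p4 (R : rcfType) (alpha : R) (n : nat) (e : rel 'I_n)
  (k : nat) (U : {set 'I_n}) (l : seq R) :
  0 <= alpha -> alpha < 1 ->
  simple_graph e -> connected_graph e ->
  (1 <= k <= n)%N -> #|U| = k.-1 ->
  eigen_seq (Aalpha R e alpha) l ->
  Sk k l >=
    (alpha - 1 / (n - k + 1)%:R) * (\sum_(u in U) (deg e u)%:R)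
    + ((2 * nedges e)%:R - (1 - alpha) * (#|boundary e U (~: U)|)%:R)
        / (n - k + 1)%:R.
Proof.
move=> a0 a1 [esym eirr] _ /andP[k1 kn] hU eig.
set N := (n - k + 1)%N.
have cW : #|~: U| = N.
  have := cardsC U; rewrite card_ord hU /N => h.
  have kk : k = k.-1.+1 by rewrite prednK.
  lia.
have N0 : (0 < N)%N by rewrite /N addn1.
set c := (Num.sqrt (N%:R : R))^-1.
have c2 : c * c = (N%:R)^-1 by rewrite -invfM -expr2 sqr_sqrtr ?ler0n.
pose E : 'M[R]_(#|U|, n) := \matrix_(i, j) ((enum_val i == j)%:R).
pose v : 'rV[R]_n := \row_j (c * (j \in ~: U)%:R).
pose X := col_mx E v.
set A := Aalpha R e alpha.
have Asym : A^T = A.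
  apply/matrixP => i j; rewrite !mxE esym eq_sym.
  by have [->|] := eqVneq i j.
have EM p (M : 'M[R]_(n, p)) i j : (E *m M) i j = M (enum_val i) j.
  rewrite mxE (bigD1 (enum_val i)) //= mxE eqxx mul1r big1 ?addr0 // => j' ne.
  by rewrite mxE eq_sym (negbTE ne) mul0r.
have ME p (M : 'M[R]_(p, n)) i j : (M *m E^T) i j = M i (enum_val j).
  rewrite mxE (bigD1 (enum_val j)) //= !mxE eqxx mulr1 big1 ?addr0 // => j' ne.
  by rewrite !mxE eq_sym (negbTE ne) mulr0.
have EE : E *m E^T = 1%:M.
  apply/matrixP => i i'; rewrite EM !mxE (inj_eq enum_val_inj).
  by rewrite eq_sym.
have Ev : E *m v^T = 0.
  apply/matrixP => i j; rewrite EM !mxE.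
  by rewrite inE enum_valP /= mulr0.
have vE : v *m E^T = 0 by rewrite -[v *m E^T]trmxK trmx_mul trmxK Ev trmx0.
have vv : v *m v^T = 1%:M.
  apply/matrixP => i j; rewrite !ord1 !mxE /=.
  rewrite (eq_bigr (fun k => c * c * ((k \in ~: U)%:R))); last first.
    by move=> x _; rewrite !mxE; case: (x \in ~: U); rewrite ?mulr1 ?mulr0.
  by rewrite -mulr_sumr sum_ind cW c2 mulVf // pnatr_eq0 -lt0n.
have XX : X *m X^T = 1%:M.
  by rewrite /X tr_col_mx mul_col_row EE Ev vE vv -scalar_mx_block.
have mk : (0 < #|U| + 1 <= n)%N.
  by rewrite hU addn1 prednK // k1 kn.
have H := kyfan Asym XX eig mk.
have SkE : Sk (#|U| + 1) l = Sk k l by rewrite hU addn1 prednK.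
rewrite SkE in H; apply: le_trans H; rewrite le_eqVlt; apply/orP; left; apply/eqP.
rewrite /X tr_col_mx mul_col_mx mul_col_row mxtrace_block.
have t1 : \tr (E *m A *m E^T) = alpha * \sum_(u in U) (deg e u)%:R.
  rewrite /mxtrace (eq_bigr (fun i => alpha * (deg e (enum_val i))%:R)); last first.
    by move=> i _; rewrite ME EM !mxE eqxx mulr1n eirr mulr0 addr0.
  by rewrite -mulr_sumr (big_enum_val (A := pred_of_set U)).
have t2 : \tr (v *m A *m v^T) = c * c * \sum_(i in ~: U) \sum_(j in ~: U) A i j.
  rewrite /mxtrace big_ord1 mxE.
  transitivity (\sum_j \sum_i (c * (i \in ~: U)%:R) * A i j * (c * (j \in ~: U)%:R)).
    by apply: eq_bigr => j _; rewrite !mxE mulr_suml; apply: eq_bigr => i _; rewrite !mxE.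
  rewrite exchange_big /= mulr_sumr [RHS]big_mkcond /=; apply: eq_bigr => i _.
  case: (i \in ~: U); last first.
    by rewrite big1 // => j _; rewrite mulr0n mulr0 !mul0r.
  rewrite mulr_sumr [RHS]big_mkcond /=; apply: eq_bigr => j _.
  by case: (j \in ~: U); rewrite ?mulr1 ?mulr0 //; ring.
have t3 : \sum_(i in ~: U) \sum_(j in ~: U) A i j =
    alpha * \sum_(i in ~: U) (deg e i)%:R +
    (1 - alpha) * \sum_(i in ~: U) \sum_(j in ~: U) (e i j)%:R.
  rewrite !mulr_sumr -big_split /=; apply: eq_bigr => i iW.
  rewrite (eq_bigr (fun j => alpha * ((deg e i)%:R *+ (i == j)) + (1 - alpha) * (e i j)%:R)); last first.
    by move=> j _; rewrite !mxE.
  rewrite big_split /= -!mulr_sumr; congr (_ * _ + _).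
  rewrite (bigD1 i) //= eqxx mulr1n big1 ?addr0 // => j /andP [_ ne].
  by rewrite eq_sym (negbTE ne) mulr0n.
have B' : (#|boundary e U (~: U)|)%:R =
    \sum_(i in ~: U) \sum_(j in U) (e i j)%:R :> R.
  rewrite (boundaryE esym) natr_sum (eq_bigr (fun u => \sum_(w in ~: U) (e u w)%:R)); last first.
    by move=> u _; rewrite natr_sum.
  rewrite exchange_big /=; apply: eq_bigr => i _; apply: eq_bigr => j _.
  by rewrite esym.
have t4 : \sum_(i in ~: U) (deg e i)%:R =
    \sum_(i in ~: U) \sum_(j in ~: U) (e i j)%:R + (#|boundary e U (~: U)|)%:R :> R.
  rewrite B' -big_split /=; apply: eq_bigr => i _.
  rewrite degE natr_sum (bigID (fun j => j \in ~: U)) /=; congr (_ + _).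
  by apply: eq_bigl => j; rewrite inE negbK.
have t5 : \sum_(u in U) (deg e u)%:R + \sum_(i in ~: U) (deg e i)%:R =
    (2 * nedges e)%:R :> R.
  rewrite (handshake esym eirr) natr_sum [RHS](bigID (fun u => u \in U)) /=.
  by congr (_ + _); apply: eq_bigl => j; rewrite inE.
rewrite t1 t2 t3 c2 -t5 t4 div1r.
ring.
Qed.
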